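(* Let $K>0$ and $m>0$ be fixed, and consider $f(q)=q!\left(\frac{m}{K}\right)^q$ for positive integers $q$ (by Theorem 2 of the paper, $f(q)$ is the asymptotic value of $p_{\textnormal{compromised}}/p_s$ in the $q$-composite scheme with key ring size $K$ when $m$ nodes are captured, so with $K$ and $p_s$ fixed this is the quantity to minimize over $q$). Then $f$ attains its minimum over the positive integers at $$q^*=\max\left\{\left\lfloor\frac{K}{m}\right\rfloor,\,1\right\}.$$
   Context: $\lfloor x\rfloor$ denotes the largest integer not exceeding $x$. In the $q$-composite scheme each sensor gets $K$ distinct keys uniformly at random from a key pool, two sensors share a secure link iff their key rings share at least $q$ keys, $p_s$ is the probability of this event, and $p_{\textnormal{compromised}}$ is the probability that a link between two non-captured sensors has all its shared keys held by the $m$ captured sensors. *)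

(* Defs.v *)
From mathcomp Require Import all_boot all_order all_algebra.
Set Implicit Arguments. Unset Strict Implicit. Unset Printing Implicit Defensive.
Import Order.TTheory GRing.Theory Num.Theory.
Local Open Scope ring_scope.

Definition fq (R : realFieldType) (K m q : nat) : R :=
  (q`!)%:R * ((m%:R / K%:R) ^+ q).

Definition qstar (K m : nat) : nat := maxn (K %/ m) 1.

(* Main.v *)
Require Import Defs.
From mathcomp Require Import all_boot all_order all_algebra.
From mathcomp Require Import zify ring lra.
Import Order.TTheory GRing.Theory Num.Theory.
Local Open Scope ring_scope.

Lemma fq_gt0 (R : realFieldType) K m q : (0 < K)%N -> (0 < m)%N -> 0 < fq R K m q.
Proof.
move=> K0 m0; rewrite /fq mulr_gt0 // ?ltr0n ?fact_gt0 //.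
by rewrite exprn_gt0 // divr_gt0 // ltr0n.
Qed.

Lemma fqS (R : realFieldType) K m n : (0 < K)%N ->
  fq R K m n.+1 = fq R K m n * (((n.+1 * m)%:R) / K%:R).
Proof.
move=> K0; rewrite /fq factS !natrM exprS.
have : K%:R != 0 :> R by rewrite pnatr_eq0 -lt0n.
move=> h; field; exact: h.
Qed.

Lemma fq_dec (R : realFieldType) K m n : (0 < K)%N -> (0 < m)%N ->
  (n.+1 * m <= K)%N -> fq R K m n.+1 <= fq R K m n.
Proof.
move=> K0 m0 h; rewrite fqS //.
rewrite ger_pMr ?fq_gt0 // ler_pdivrMr ?ltr0n // mul1r ler_nat //.
Qed.

Lemma fq_inc (R : realFieldType) K m n : (0 < K)%N -> (0 < m)%N ->
  (K <= n.+1 * m)%N -> fq R K m n <= fq R K m n.+1.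
Proof.
move=> K0 m0 h; rewrite fqS //.
rewrite ler_pMr ?fq_gt0 // ler_pdivlMr ?ltr0n // mul1r ler_nat //.
Qed.

Lemma dec_range (R : realFieldType) K m n k : (0 < K)%N -> (0 < m)%N ->
  ((n + k) * m <= K)%N -> fq R K m (n + k) <= fq R K m n.
Proof.
move=> K0 m0; elim: k => [|k IH] h; first by rewrite addn0.
apply: le_trans (IH _); last by apply: leq_trans h; rewrite leq_mul2r addnS leqnSn orbT.
by rewrite addnS; apply: fq_dec => //; rewrite -addnS.
Qed.

Lemma inc_range (R : realFieldType) K m n k : (0 < K)%N -> (0 < m)%N ->
  (K <= n.+1 * m)%N -> fq R K m n <= fq R K m (n + k).
Proof.
move=> K0 m0 h; elim: k => [|k IH]; first by rewrite addn0.
apply: le_trans IH _; rewrite addnS; apply: fq_inc => //.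
by apply: leq_trans h _; rewrite leq_mul2r ltnS leq_addr orbT.
Qed.

Theorem corollary2 (R : realFieldType) (K m : nat) :
  (0 < K)%N -> (0 < m)%N ->
  forall q : nat, (0 < q)%N -> fq R K m (qstar K m) <= fq R K m q.
Proof.
move=> K0 m0 q q0.
have hd : (K %/ m * m <= K)%N by rewrite leq_trunc_div.
have hd' : (K < (K %/ m).+1 * m)%N by rewrite ltn_ceil.
rewrite /qstar.
move: hd hd'; set d := (K %/ m)%N; clearbody d => hd hd'.
case: (leqP q (maxn d 1)) => hq.
- have -> : maxn d 1 = (q + (maxn d 1 - q))%N by rewrite subnKC.
  case: (posnP d) => [d0|dp].
    have -> : (q + (maxn d 1 - q))%N = q by subst d; lia.
    by [].
  apply: dec_range => //; rewrite subnKC //.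
  by rewrite (maxn_idPl dp).
- have -> : q = (maxn d 1 + (q - maxn d 1))%N by rewrite subnKC // ltnW.
  apply: inc_range => //; apply: ltnW; apply: leq_trans hd' _.
  by rewrite leq_mul2r ltnS leq_maxl orbT.
Qed.
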